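(* Let $b\ge 2$ and $m\ge 1$ be integers. Let $\mathcal P_0,\ldots,\mathcal P_{b-1}$ be (not necessarily distinct) $(0,m-1,2)$-nets in base $b$, each contained in $\mathbb Q(b^{m-1})\times\mathbb Q(b^{m-1})$, and let $\pi_0,\ldots,\pi_{b^{m-1}-1}$ be permutations of $\{0,1,\ldots,b-1\}$. Put $\widehat{\mathcal P}=\bigcup_{j=0}^{b-1}A_b(\mathcal P_j+(j,0))$, where $A_b(x,y)=(x/b,y)$, and $\mathcal P=\psi_{b,m}(\widehat{\mathcal P})$, where $\psi_{b,m}:\mathbb Q(b^m)\times\mathbb Q(b^{m-1})\to\mathbb Q(b^m)\times\mathbb Q(b^m)$ is given by $\psi_{b,m}(x,y)=\left(x,\,y+\pi_{b^{m-1}y}(\lfloor bx\rfloor)\,b^{-m}\right)$. Then $\mathcal P$ is a $(0,m,2)$-net in base $b$.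
   Context: For $k\ge 0$, $\mathbb Q(b^k)=\{0,\frac{1}{b^k},\frac{2}{b^k},\ldots,\frac{b^k-1}{b^k}\}$. An elementary $b$-adic interval in $[0,1)^2$ is a set $\prod_{j=1}^2\left[\frac{a_j}{b^{d_j}},\frac{a_j+1}{b^{d_j}}\right)$ with $d_j\in\mathbb N_0$ and $a_j\in\{0,1,\ldots,b^{d_j}-1\}$; its volume is $b^{-(d_1+d_2)}$. For integers $0\le t\le m$, a $b^m$-element point set in $[0,1)^s$ is a $(t,m,s)$-net in base $b$ if every elementary $b$-adic interval of volume $b^{t-m}$ contains exactly $b^t$ of its points. For $\mathcal P\subseteq\mathbb R^2$ and $v\in\mathbb R^2$, $\mathcal P+v=\{p+v:p\in\mathcal P\}$. *)

(* Defs.v *)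
From HB Require Import structures.
From mathcomp Require Import all_boot all_order all_fingroup all_algebra.
Set Implicit Arguments. Unset Strict Implicit. Unset Printing Implicit Defensive.
Import Order.TTheory GRing.Theory Num.Theory.
Local Open Scope ring_scope.

Definition point := (rat * rat)%type.

Definition in_Qgrid (b k : nat) (x : rat) : Prop :=
  exists a : nat, (a < b ^ k)%N /\ x = a%:R / (b ^ k)%:R.

Definition in_elem_interval (b d1 d2 a1 a2 : nat) (p : point) : bool :=
  (a1%:R / (b ^ d1)%:R <= p.1) && (p.1 < a1.+1%:R / (b ^ d1)%:R) &&
  (a2%:R / (b ^ d2)%:R <= p.2) && (p.2 < a2.+1%:R / (b ^ d2)%:R).

Definition in_unit_square (p : point) : Prop :=
  0 <= p.1 < 1 /\ 0 <= p.2 < 1.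

(* (t,m,2)-net in base b: b^m points in [0,1)^2, every elementary b-adic
   interval of volume b^(t-m) (i.e. d1 + d2 = m - t) contains exactly b^t
   points (counted with multiplicity). *)
Definition is_net2 (b t m : nat) (P : seq point) : Prop :=
  (t <= m)%N /\ size P = (b ^ m)%N /\ (forall p, p \in P -> in_unit_square p) /\
  forall d1 d2 a1 a2 : nat, (d1 + d2 = m - t)%N -> (a1 < b ^ d1)%N -> (a2 < b ^ d2)%N ->
    count (in_elem_interval b d1 d2 a1 a2) P = (b ^ t)%N.

Definition perm_app (b : nat) (s : {perm 'I_b}) (k : nat) : nat :=
  match @insub nat (fun k => (k < b)%N) 'I_b k with
  | Some i => val (s i)
  | None => k
  end.

Definition Phat (b : nat) (Ps : nat -> seq point) : seq point :=
  flatten [seq [seq (((p.1 + j%:R) / b%:R), p.2) | p <- Ps j] | j <- iota 0 b].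

Definition psi (b m : nat) (pi : nat -> {perm 'I_b}) (p : point) : point :=
  (p.1, p.2 + (perm_app (pi `|Num.floor ((b ^ m.-1)%:R * p.2)|%N)
                         `|Num.floor (b%:R * p.1)|%N)%:R / (b ^ m)%:R).
Arguments psi : clear implicits.
Arguments perm_app : clear implicits.
Arguments Phat : clear implicits.
Arguments is_net2 : clear implicits.

(* Main.v *)
Require Import Defs.
From HB Require Import structures.
From mathcomp Require Import all_boot all_order all_fingroup all_algebra.
From mathcomp Require Import ring.
Import Order.TTheory GRing.Theory Num.Theory.
Local Open Scope ring_scope.

Section NatPart.
Local Open Scope nat_scope.
Lemma sumn_const (s : seq nat) (f : nat -> nat) c :
  (forall j, j \in s -> f j = c) -> sumn (map f s) = c * size s.
Proof.
elim: s => [|x s IH] H /=; first by rewrite muln0.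
by rewrite H ?inE ?eqxx // IH ?mulnS // => j js; apply: H; rewrite inE js orbT.
Qed.

Lemma sumn_single (s : seq nat) (f : nat -> nat) (j0 c : nat) :
  (forall j, j \in s -> f j = if j == j0 then c else 0) -> uniq s -> j0 \in s ->
  sumn (map f s) = c.
Proof.
elim: s => // x s IH Hf /= /andP[xs us]; rewrite inE => /orP[/eqP ex|js].
  subst x. rewrite Hf ?inE ?eqxx //.
  rewrite (@sumn_const _ _ 0) ?mul0n ?addn0 // => j js.
  rewrite Hf ?inE ?js ?orbT //; case: eqP => // ej; subst; by rewrite js in xs.
rewrite Hf ?inE ?eqxx //.
have -> : (x == j0) = false by apply/negP => /eqP ex; subst; rewrite js in xs.
by rewrite IH // => j jt; apply: Hf; rewrite inE jt orbT.
Qed.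


Lemma eq_divmod B j w a : w < B -> (j * B + w == a) = (j == a %/ B) && (w == a %% B).
Proof.
move=> wB; have B0 : 0 < B by apply: leq_ltn_trans wB.
apply/eqP/andP => [<-|[/eqP -> /eqP ->]]; last by rewrite -divn_eq.
by rewrite divnMDl // modnMDl (divn_small wB) (modn_small wB) addn0.
Qed.

Lemma perm_appE b (s : {perm 'I_b}) j (hj : j < b) :
  perm_app b s j = val (s (Ordinal hj)).
Proof.
rewrite /perm_app; case: insubP => [i _ vi|]; last by rewrite hj.
by congr (val (s _)); apply: val_inj.
Qed.

Lemma perm_app_eq b (s : {perm 'I_b}) j r (hr : r < b) : j < b ->
  (perm_app b s j == r) = (j == val ((s^-1)%g (Ordinal hr))).
Proof.
move=> hj; rewrite (@perm_appE _ _ _ hj).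
apply/eqP/eqP => [h|e].
  have : s (Ordinal hj) = Ordinal hr by apply: val_inj.
  by move=> <-; rewrite permK.
by rewrite (_ : Ordinal hj = (s^-1)%g (Ordinal hr)) ?permKV //; apply: val_inj.
Qed.

Lemma perm_app_lt b (s : {perm 'I_b}) j : j < b -> perm_app b s j < b.
Proof. by move=> hj; rewrite (@perm_appE _ _ _ hj) ltn_ord. Qed.

Lemma core (b n : nat) (pi : nat -> {perm 'I_b}) (Q : nat -> seq (nat*nat)) :
  1 < b ->
  (forall j, j < b -> forall q, q \in Q j -> (q.1 < b ^ n)%N /\ (q.2 < b ^ n)%N) ->
  (forall j, j < b -> forall d1 d2 a1 a2, d1 + d2 = n -> a1 < (b ^ d1)%N -> a2 < (b ^ d2)%N ->
     count (fun q => (q.1 %/ b ^ (n-d1) == a1) && (q.2 %/ b ^ (n-d2) == a2)) (Q j) = 1) ->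
  forall d1 d2 a1 a2, d1 + d2 = n.+1 -> a1 < (b ^ d1)%N -> a2 < (b ^ d2)%N ->
  count (fun q => (q.1 %/ b ^ (n.+1-d1) == a1) && (q.2 %/ b ^ (n.+1-d2) == a2))
    (flatten [seq [seq (q.1 + j * b ^ n, b * q.2 + perm_app b (pi q.2) j) | q <- Q j]
      | j <- iota 0 b]) = 1.
Proof.
move=> hb Hbd Hnet d1 d2 a1 a2 Hd ha1 ha2.
have b0 : 0 < b by apply: ltnW.
rewrite count_flatten -map_comp.
case: d1 Hd ha1 => [|e] Hd ha1.
- have a10 : a1 = 0 by move: ha1; rewrite expn0; case: a1.
  rewrite add0n in Hd; subst d2 a1.
  have hr : a2 %% b < b by rewrite ltn_pmod.
  pose k := a2 %/ b.
  pose j0 := val (((pi k)^-1)%g (Ordinal hr)).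
  apply: (@sumn_single _ _ j0); last first.
  + by rewrite mem_iota /= add0n ltn_ord.
  + exact: iota_uniq.
  move=> j; rewrite mem_iota add0n /= => hj.
  rewrite count_map.
  transitivity (count (fun q => (j == j0) && (q.2 == k)) (Q j)).
    apply: eq_in_count => q qin /=.
    have [h1 h2] := Hbd j hj q qin.
    rewrite subnn expn0 divn1 subn0 divn_small; last first.
      rewrite expnS.
      apply: (@leq_trans (j.+1 * b ^ n)); first by rewrite mulSn ltn_add2r.
      by rewrite leq_mul2r hj orbT.
    rewrite eqxx /= mulnC eq_divmod ?perm_app_lt //.
    case: (eqVneq q.2 k) => [->|]; last by rewrite andbF.
    by rewrite (@perm_app_eq _ _ _ _ hr) // andbT.
  case: (eqVneq j j0) => [ej|nj] /=; last exact: count_pred0.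
  rewrite ej -(Hnet j0 (ltn_ord _) 0 n 0 k) //.
  + apply: eq_in_count => q qin /=.
    have [h1 _] := Hbd j0 (ltn_ord _) q qin.
    by rewrite subn0 subnn expn0 divn1 divn_small.
  + by rewrite ltn_divLR // -expnSr.
- rewrite addSn in Hd; case: Hd => Hd.
  have en : e <= n by rewrite -Hd leq_addr.
  have d2n : d2 <= n by rewrite -Hd leq_addl.
  pose j0 := a1 %/ b ^ e.
  have hj0 : j0 < b by rewrite ltn_divLR ?expn_gt0 ?b0 // -expnS.
  apply: (@sumn_single _ _ j0); last first.
  + by rewrite mem_iota /= add0n.
  + exact: iota_uniq.
  move=> j; rewrite mem_iota add0n /= => hj.
  rewrite count_map.
  transitivity (count (fun q => (j == j0) && ((q.1 %/ b ^ (n-e) == a1 %% b ^ e) && (q.2 %/ b ^ (n-d2) == a2))) (Q j)).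
    apply: eq_in_count => q qin /=.
    have [h1 h2] := Hbd j hj q qin.
    rewrite subSS (subSn d2n) expnS divnMA [b * q.2]mulnC divnMDl // (divn_small (@perm_app_lt _ _ _ hj)) addn0.
    rewrite (_ : q.1 + j * b ^ n = (j * b ^ e) * b ^ (n-e) + q.1); last first.
      by rewrite addnC -mulnA -expnD subnKC.
    rewrite divnMDl ?expn_gt0 ?b0 // eq_divmod ?andbA //.
    by rewrite ltn_divLR ?expn_gt0 ?b0 // -expnD addnC subnK.
  case: (eqVneq j j0) => [ej|nj] /=; last by exact: count_pred0.
  rewrite ej; apply: (Hnet j0 hj0 e d2) => //.
  by rewrite ltn_pmod ?expn_gt0 ?b0.
Qed.

End NatPart.

Lemma ler_divnat (D x y : nat) : (0 < D)%N ->
  ((x%:R / D%:R <= y%:R / D%:R :> rat) = (x <= y)%N).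
Proof. by move=> D0; rewrite ler_pM2r ?invr_gt0 ?ltr0n // ler_nat. Qed.

Lemma ltr_divnat (D x y : nat) : (0 < D)%N ->
  ((x%:R / D%:R < y%:R / D%:R :> rat) = (x < y)%N).
Proof. by move=> D0; rewrite ltr_pM2r ?invr_gt0 ?ltr0n // ltr_nat. Qed.

Lemma grid_iv (b k d c a : nat) : (0 < b)%N -> (d <= k)%N ->
  ((c%:R / (b ^ d)%:R <= a%:R / (b ^ k)%:R :> rat) &&
   (a%:R / (b ^ k)%:R < (c.+1)%:R / (b ^ d)%:R :> rat)) = (a %/ b ^ (k - d) == c)%N.
Proof.
move=> b0 dk.
have e : (b ^ k = b ^ d * b ^ (k - d))%N by rewrite -expnD subnKC.
have hB : (0 < b ^ (k - d))%N by rewrite expn_gt0 b0.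
have hD : (0 < b ^ d)%N by rewrite expn_gt0 b0.
have hK : (0 < b ^ k)%N by rewrite expn_gt0 b0.
have f : forall x : nat, x%:R / (b ^ d)%:R = (x * b ^ (k - d))%:R / (b ^ k)%:R :> rat.
  move=> x; rewrite e !natrM; field.
  by rewrite !pnatr_eq0 -!lt0n hB hD.
rewrite !f ler_divnat // ltr_divnat // eqn_leq leq_divRL //.
by rewrite -[(a %/ _ <= c)%N]ltnS ltn_divLR // andbC.
Qed.

Lemma iv_grid b k d1 d2 a1 a2 X Y : (0 < b)%N -> (d1 <= k)%N -> (d2 <= k)%N ->
  in_elem_interval b d1 d2 a1 a2 (X%:R / (b ^ k)%:R, Y%:R / (b ^ k)%:R) =
  (X %/ b ^ (k - d1) == a1)%N && (Y %/ b ^ (k - d2) == a2)%N.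
Proof.
move=> b0 h1 h2; rewrite /in_elem_interval /= -andbA.
by rewrite grid_iv // grid_iv.
Qed.

Lemma floor_nat (a : nat) : Num.floor (a%:R : rat) = a%:Z.
Proof. by change (a%:R : rat) with ((a%:Z)%:~R : rat); rewrite intrKfloor. Qed.

Definition toN (b n : nat) (x : rat) : nat := `|Num.floor ((b ^ n)%:R * x)|%N.

Lemma grid_toN b n x : (0 < b)%N -> in_Qgrid b n x ->
  x = (toN b n x)%:R / (b ^ n)%:R /\ (toN b n x < b ^ n)%N.
Proof.
move=> b0 [a [ha ->]].
have hK : (b ^ n)%:R != 0 :> rat by rewrite pnatr_eq0 -lt0n expn_gt0 b0.
rewrite /toN [(b ^ n)%:R * _]mulrC divfK // floor_nat /=.
by [].
Qed.

Lemma psi_pt b n pi (u v j : nat) : (1 < b)%N -> (u < b ^ n)%N -> (v < b ^ n)%N -> (j < b)%N ->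
  psi b n.+1 pi ((u%:R / (b ^ n)%:R + j%:R) / b%:R, v%:R / (b ^ n)%:R) =
  ((u + j * b ^ n)%:R / (b ^ n.+1)%:R, (b * v + perm_app b (pi v) j)%:R / (b ^ n.+1)%:R).
Proof.
move=> hb hu hv hj.
have b0 : (0 < b)%N by apply: ltnW.
have hK : (b ^ n)%:R != 0 :> rat by rewrite pnatr_eq0 -lt0n expn_gt0 b0.
have hb0 : b%:R != 0 :> rat by rewrite pnatr_eq0 -lt0n b0.
rewrite /psi /=.
have -> : Num.floor ((b ^ n)%:R * (v%:R / (b ^ n)%:R) : rat) = v%:Z.
  by rewrite [(b ^ n)%:R * _]mulrC divfK // floor_nat.
have -> : Num.floor (b%:R * ((u%:R / (b ^ n)%:R + j%:R) / b%:R) : rat) = j%:Z.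
  rewrite [b%:R * _]mulrC divfK //; apply: floor_def.
  rewrite -PoszD addn1.
  change ((j%:Z)%:~R : rat) with (j%:R : rat).
  change (((j.+1)%:Z)%:~R : rat) with (j.+1%:R : rat).
  rewrite lerDr divr_ge0 ?ler0n //= -natr1 addrC ltrD2l ltr_pdivrMr ?ltr0n ?expn_gt0 ?b0 //.
  by rewrite mul1r ltr_nat.
rewrite /= expnS !natrD !natrM; congr (_, _); field; by rewrite ?hK ?hb0.
Qed.

Lemma unit_pt (B X Y : nat) : (X < B)%N -> (Y < B)%N ->
  in_unit_square (X%:R / B%:R, Y%:R / B%:R).
Proof.
move=> hX hY; have B0 : (0 < B)%N by apply: leq_ltn_trans hX.
by rewrite /in_unit_square /= !divr_ge0 ?ler0n //= !ltr_pdivrMr ?ltr0n // !mul1r !ltr_nat.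
Qed.

Theorem mainTheorem6 (b m : nat) (hb : (2 <= b)%N) (hm : (1 <= m)%N)
  (Ps : nat -> seq point) (pi : nat -> {perm 'I_b}) :
  (forall j : nat, (j < b)%N ->
     is_net2 b 0 (m - 1) (Ps j) /\
     (forall p, p \in Ps j -> in_Qgrid b (m - 1) p.1 /\ in_Qgrid b (m - 1) p.2)) ->
  is_net2 b 0 m [seq psi b m pi p | p <- Phat b Ps].
Proof.
case: m hm => // n _ H; rewrite subn1 /= in H.
have b0 : (0 < b)%N by apply: ltnW.
pose Q j := [seq (toN b n p.1, toN b n p.2) | p <- Ps j].
pose R := flatten [seq [seq (q.1 + j * b ^ n, b * q.2 + perm_app b (pi q.2) j)%N | q <- Q j]
      | j <- iota 0 b].
have HQ : forall j, (j < b)%N -> forall p, p \in Ps j ->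
    p = ((toN b n p.1)%:R / (b ^ n)%:R, (toN b n p.2)%:R / (b ^ n)%:R) /\
    (toN b n p.1 < b ^ n)%N /\ (toN b n p.2 < b ^ n)%N.
  move=> j hj p pin; have [g1 g2] := (H j hj).2 p pin.
  have [e1 h1] := grid_toN _ _ _ b0 g1; have [e2 h2] := grid_toN _ _ _ b0 g2.
  split => //; case: p {pin g1 g2 h1 h2} e1 e2 => x y /= e1 e2.
  by rewrite -e1 -e2.
have HQb : forall j, (j < b)%N -> forall q, q \in Q j -> (q.1 < b ^ n)%N /\ (q.2 < b ^ n)%N.
  move=> j hj q /mapP [p pin ->] /=; have [_ hh] := HQ j hj p pin; exact: hh.
have HQn : forall j, (j < b)%N -> forall d1 d2 a1 a2, (d1 + d2 = n)%N -> (a1 < b ^ d1)%N ->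
    (a2 < b ^ d2)%N ->
    count (fun q => (q.1 %/ b ^ (n - d1) == a1)%N && (q.2 %/ b ^ (n - d2) == a2)%N) (Q j) = 1%N.
  move=> j hj d1 d2 a1 a2 hd ha1 ha2.
  have [[_ [_ [_ Hc]]] _] := H j hj.
  rewrite count_map -(expn0 b) -(Hc d1 d2 a1 a2) ?subn0 //.
  apply: eq_in_count => p pin /=.
  have [ep _] := HQ j hj p pin.
  by rewrite [in RHS]ep iv_grid // -hd ?leq_addr ?leq_addl.
have eq : [seq psi b n.+1 pi p | p <- Phat b Ps] =
    [seq ((q.1)%:R / (b ^ n.+1)%:R, (q.2)%:R / (b ^ n.+1)%:R) | q <- R].
  rewrite /Phat /R !map_flatten -!map_comp; congr flatten.
  apply/eq_in_map => j; rewrite mem_iota add0n => /= hj.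
  rewrite /= -!map_comp; apply/eq_in_map => p pin /=.
  have [ep [h1 h2]] := HQ j hj p pin.
  by rewrite {1 2}ep psi_pt.
have Rb : forall q, q \in R -> (q.1 < b ^ n.+1)%N /\ (q.2 < b ^ n.+1)%N.
  move=> q /flattenP [s /mapP [j]]; rewrite mem_iota add0n => /= hj -> /mapP [q0 q0in ->] /=.
  have [h1 h2] := HQb j hj q0 q0in.
  split.
    rewrite expnS; apply: (@leq_trans (j.+1 * b ^ n)); first by rewrite mulSn ltn_add2r.
    by rewrite leq_mul2r hj orbT.
  rewrite expnS; apply: (@leq_trans (b * q0.2.+1)); last by rewrite leq_mul2l h2 orbT.
  by rewrite mulnS addnC ltn_add2r perm_app_lt.
rewrite eq; split => //; split; last split.
- rewrite size_map /R size_flatten /shape -map_comp (@sumn_const _ _ (b ^ n)).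
    by rewrite size_iota expnS mulnC.
  move=> j; rewrite mem_iota add0n => /= hj.
  by rewrite size_map size_map; case: (H j hj) => -[_ [-> _]].
- move=> p /mapP [q qin ->]; have [h1 h2] := Rb q qin; exact: unit_pt.
- move=> d1 d2 a1 a2 hd ha1 ha2; rewrite subn0 in hd.
  rewrite count_map expn0.
  rewrite -(core b n pi Q hb HQb HQn d1 d2 a1 a2 hd ha1 ha2).
  apply: eq_count => q /=.
  by rewrite iv_grid // -hd ?leq_addr ?leq_addl.
Qed.
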